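(* Let $\Sigma$ be an alphabet with $|\Sigma|\geq 4$, let $\#\notin\Sigma$, let $S$ be a string of length $n$ over $\Sigma$, and let $P$ be a substring of $S$. Suppose that there is a string $S'$ obtained from $S$ by replacing the letters at $k$ positions with $\#$ such that $|\mathsf{occ}_S(P)|-|\mathsf{occ}_{S'}(P)|\geq y$ for some positive integer $y$. Then there is a string $S''\in\Sigma^n$ obtained from $S$ by $k$ substitutions with letters from $\Sigma$ (so $d_H(S,S'')\leq k$) such that $|\mathsf{occ}_S(P)|-|\mathsf{occ}_{S''}(P)|\geq y$.
   Context: $\mathsf{occ}_T(P)$ is the set of starting positions of occurrences of $P$ in $T$; $d_H$ is the Hamming distance between strings of equal length. *)

(* Defs.v *)
From mathcomp Require Import all_boot.
Set Implicit Arguments. Unset Strict Implicit. Unset Printing Implicit Defensive.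

Definition occ (A : eqType) (T P : seq A) : seq nat :=
  [seq i <- iota 0 (size T).+1 | (i + size P <= size T) && (take (size P) (drop i T) == P)].

Definition dH (A : eqType) (s t : seq A) : nat :=
  count (fun p : A * A => p.1 != p.2) (zip s t).

(* S' (over Sigma ∪ {#}, # encoded as None) is obtained from S by replacing
   the letters at exactly k positions with #. *)
Definition hash_masked (A : eqType) (S : seq A) (S' : seq (option A)) (k : nat) : Prop :=
  size S' = size S /\
  (forall i, i < size S -> nth None S' i = None \/ nth None S' i = nth None (map Some S) i) /\
  count (fun c => c == None) S' = k.

(* Main.v *)
Require Import Defs.
From mathcomp Require Import all_boot zify.
From Stdlib Require Import Classical.
Set Implicit Arguments. Unset Strict Implicit.

Lemma three_distinct (S : finType) : 3 < #|S| -> exists a b c : S, a <> b /\ b <> c /\ a <> c.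
Proof.
move=> h.
have h0 : 0 < #|S| by lia.
have h1 : 1 < #|S| by lia.
have h2 : 2 < #|S| by lia.
exists (enum_val (Ordinal h0)), (enum_val (Ordinal h1)), (enum_val (Ordinal h2)).
by split; [|split] => /enum_val_inj [].
Qed.

Lemma take_eqP (A : eqType) (d : A) (s t : seq A) j : j + size t <= size s ->
  reflect (forall x, x < size t -> nth d s (j + x) = nth d t x)
          (take (size t) (drop j s) == t).
Proof.
move=> hj; apply: (iffP eqP) => [E x hx|H].
  by have := congr1 (fun u => nth d u x) E; rewrite nth_take // nth_drop.
apply: (@eq_from_nth _ d).
  rewrite size_take size_drop; case: ltnP => // h; lia.
move=> x; rewrite size_take size_drop => hx.
have hx' : x < size t by move: hx; case: (ltnP (size t) (size s - j)) => ? ?; lia.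
by rewrite nth_take // nth_drop H.
Qed.

Lemma occ_map (Sigma : eqType) (S P : seq Sigma) :
  occ (map Some S) (map Some P) = occ S P.
Proof.
rewrite /occ !size_map; apply: eq_filter => j.
by rewrite -map_drop -map_take (inj_eq (inj_map (@Some_inj _))).
Qed.

Definition cand (A : Type) (T Q : seq (option A)) i j : Prop :=
  j <= i < j + size Q /\ forall x, x < size Q -> j + x <> i -> nth None T (j+x) = nth None Q x.

Lemma key (A : Type) (T Q : seq (option A)) i j1 j2 j3 :
  cand T Q i j1 -> cand T Q i j2 -> cand T Q i j3 -> j1 < j2 -> j2 < j3 ->
  nth None Q (i - j1) = nth None Q (i - j3).
Proof.
move=> [r1 c1] [r2 c2] [r3 c3] h12 h23.
have e1 := c2 (i - j3) ltac:(lia) ltac:(lia).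
have e2 := c1 (j2 + (i - j3) - j1) ltac:(lia) ltac:(lia).
have e3 := c3 (j2 + (i - j3) - j1) ltac:(lia) ltac:(lia).
have e4 := c2 (i - j1) ltac:(lia) ltac:(lia).
have E1 : j1 + (j2 + (i - j3) - j1) = j2 + (i - j3) by lia.
have E2 : j3 + (j2 + (i - j3) - j1) = j2 + (i - j1) by lia.
rewrite E1 in e2; rewrite E2 in e3.
by rewrite -e4 e3 -e2 e1.
Qed.

Lemma tri (A : Type) (T Q : seq (option A)) i j1 j2 j3 :
  cand T Q i j1 -> cand T Q i j2 -> cand T Q i j3 ->
  j1 <> j2 -> j2 <> j3 -> j1 <> j3 ->
  nth None Q (i - j1) = nth None Q (i - j2) \/
  nth None Q (i - j2) = nth None Q (i - j3) \/
  nth None Q (i - j1) = nth None Q (i - j3).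
Proof.
move=> c1 c2 c3 n12 n23 n13.
case: (ltngtP j1 j2) => [h12|h12|/eqP]; last by move/eqP: n12 => /negbTE ->.
- case: (ltngtP j2 j3) => [h23|h23|/eqP]; last by move/eqP: n23 => /negbTE ->.
  + by right; right; apply: (key c1 c2 c3).
  + case: (ltngtP j1 j3) => [h13|h13|/eqP]; last by move/eqP: n13 => /negbTE ->.
    * by left; apply: (key c1 c3 c2).
    * by right; left; symmetry; apply: (key c3 c1 c2).
- case: (ltngtP j2 j3) => [h23|h23|/eqP]; last by move/eqP: n23 => /negbTE ->.
  + case: (ltngtP j1 j3) => [h13|h13|/eqP]; last by move/eqP: n13 => /negbTE ->.
    * by right; left; apply: (key c2 c1 c3).
    * by left; symmetry; apply: (key c2 c3 c1).
  + by right; right; symmetry; apply: (key c3 c2 c1).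
Qed.

Lemma choose_c (Sigma : finType) (T : seq (option Sigma)) (P : seq Sigma) i :
  3 < #|Sigma| ->
  exists c : Sigma, forall j, cand T (map Some P) i j -> nth None (map Some P) (i - j) <> Some c.
Proof.
move=> hS; apply: NNPP => N.
have H : forall c : Sigma, exists j, cand T (map Some P) i j /\ nth None (map Some P) (i - j) = Some c.
  move=> c; apply: NNPP => N2; apply: N; exists c => j cj E; apply: N2; by exists j.
have [a [b [c [nab [nbc nac]]]]] := three_distinct hS.
have [ja [ca ea]] := H a; have [jb [cb eb]] := H b; have [jc [cc ec]] := H c.
have nab' : ja <> jb by move=> E; subst; apply: nab; congruence.
have nbc' : jb <> jc by move=> E; subst; apply: nbc; congruence.
have nac' : ja <> jc by move=> E; subst; apply: nac; congruence.
have := tri ca cb cc nab' nbc' nac'; rewrite ea eb ec; case=> [[]|[[]|[]]] //.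
Qed.

Lemma nth_Q_some (Sigma : Type) (P : seq Sigma) x : x < size P ->
  nth None (map Some P) x <> None.
Proof.
elim: P x => [|p P IH] [|x] //= h; exact: IH.
Qed.

Lemma occ_step (Sigma : eqType) (T : seq (option Sigma)) (P : seq Sigma) i c :
  i < size T -> nth None T i = None ->
  (forall j, cand T (map Some P) i j -> nth None (map Some P) (i - j) <> Some c) ->
  occ (set_nth None T i (Some c)) (map Some P) = occ T (map Some P).
Proof.
move=> hi hN hc.
have hs : size (set_nth None T i (Some c)) = size T.
  rewrite size_set_nth; apply/maxn_idPr; exact: hi.
rewrite /occ hs; apply: eq_filter => j.
case hj: (j + size (map Some P) <= size T) => //=.
have hj' : j + size (map Some P) <= size (set_nth None T i (Some c)) by rewrite hs.
apply/idP/idP.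
- move/(@take_eqP _ None _ _ _ hj') => H; apply/(@take_eqP _ None _ _ _ hj) => x hx.
  case: (boolP ((j <= i) && (i < j + size (map Some P)))) => [/andP [r1 r2]|nr].
    exfalso.
    have cj : cand T (map Some P) i j.
      split; first by rewrite r1 r2.
      move=> z hz nz; rewrite -H // nth_set_nth /=.
      by case: ifP => // /eqP.
    apply: (hc j cj).
    have hij : i - j < size (map Some P) by lia.
    have := H (i - j) hij.
    have -> : j + (i - j) = i by lia.
    by rewrite nth_set_nth /= eqxx.
  rewrite -H // nth_set_nth /=; case: ifP => // /eqP E0; have E : j + x = i := E0; exfalso.
  move: nr; rewrite negb_and -ltnNge -leqNgt => /orP [] hh; clear E0; rewrite ?size_map in hx hh; lia.
- move/(@take_eqP _ None _ _ _ hj) => H; apply/(@take_eqP _ None _ _ _ hj') => x hx.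
  rewrite nth_set_nth /=; case: ifP => [/eqP E0|_]; last exact: H.
  have E : j + x = i := E0.
  rewrite ?size_map in hx.
  have hij : i - j < size (map Some P) by rewrite size_map; lia.
  exfalso; have := H (i - j) hij.
  have -> : j + (i - j) = i by lia.
  rewrite hN => /esym; apply: nth_Q_some; lia.
Qed.

Lemma fill (Sigma : finType) (P : seq Sigma) : 3 < #|Sigma| ->
  forall k (T : seq (option Sigma)), count (fun c => c == None) T = k ->
  exists U : seq Sigma, size U = size T /\
    (forall i, i < size T -> nth None T i = None \/ nth None T i = nth None (map Some U) i) /\
    occ U P = occ T (map Some P).
Proof.
move=> hS; elim=> [|k IH] T hk.
  have HT : map Some (pmap id T) = T.
    rewrite pmapS_filter map_id; apply/all_filterP/allP => x xT.
    case: x xT => // xT.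
    exfalso; have : 0 < count (fun c => c == None) T.
      by rewrite -has_count; apply/hasP; exists None.
    by rewrite hk.
  move: (pmap id T) HT => U <-.
  exists U; rewrite size_map; split=> //; split.
    by move=> i _; right.
  by rewrite occ_map.
have hN : has (fun c => c == None) T by rewrite has_count hk.
set i := index None T.
have hi : i < size T by rewrite /i index_mem; case/hasP: hN => x xT /eqP <-.
have hTi : nth None T i = None by rewrite nth_index //; case/hasP: hN => x xT /eqP <-.
have [c hc] := choose_c T P i hS.
set T' := set_nth None T i (Some c).
have hk' : count (fun c => c == None) T' = k.
  by rewrite count_set_nth_ltn // hk hTi /= addn0 subn1.
have [U [sU [pU oU]]] := IH T' hk'.
have hs : size T' = size T by rewrite size_set_nth; apply/maxn_idPr.
exists U; split; first by rewrite sU hs.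
split; last by rewrite oU /T' occ_step.
move=> x hx; have := pU x ltac:(by rewrite hs).
rewrite /T' nth_set_nth /=; case: ifP => [/eqP -> _|_ //]; by left.
Qed.

Lemma dH_le (A : eqType) (S U : seq A) (T : seq (option A)) :
  size U = size S -> size T = size S ->
  (forall i, i < size S -> nth None T i = None \/
     (nth None T i = nth None (map Some S) i /\ nth None T i = nth None (map Some U) i)) ->
  dH S U <= count (fun c => c == None) T.
Proof.
rewrite /dH.
elim: S U T => [|s S IH] [|u U] [|t T] //= [hU] [hT] H.
have H0 := H 0 isT; have := IH U T hU hT (fun i hi => H i.+1 hi).
case: H0 => [/= -> | /= [-> [->]]] /=; last by rewrite eqxx /=.
move=> h; case: (s != u) => /=; lia.
Qed.

Theorem lemma11 (Sigma : finType) (S P : seq Sigma) (k y : nat)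
  (S' : seq (option Sigma)) :
  3 < #|Sigma| ->
  infix P S ->
  hash_masked S S' k ->
  0 < y ->
  size (occ S' (map Some P)) + y <= size (occ S P) ->
  exists S'' : seq Sigma,
    size S'' = size S /\ dH S S'' <= k /\
    size (occ S'' P) + y <= size (occ S P).
Proof.
move=> hS _ [hs [hm hc]] _ hy.
have [U [sU [pU oU]]] := @fill _ P hS _ S' (erefl _).
exists U; split; first by rewrite sU hs.
split; last by rewrite oU.
rewrite -hc; apply: dH_le; rewrite ?sU ?hs //.
move=> i hi; have := hm i hi; rewrite -hs in hi; have := pU i hi.
case=> [->|->]; first by left.
case=> [->|E]; first by left.
by right; split.
Qed.
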